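(* There exists $k_0$ such that for all integers $k\ge k_0$, all positive integers $N\ge k4^k$, all $\delta\in(0,2^{-k}/20]$ and all $x\in\left[4^{k^2},N^k/(k-1)!\right]$, \[ \#\mathcal{S}_1(N,\delta,x)\ge\frac{x^{1/k}}{200}. \]
   Context: For $y\in\mathbb{R}$, $\|y\|$ denotes the distance from $y$ to the nearest integer. For a positive integer $N$ and real $\delta,x\ge0$, $\mathcal{S}_1(N,\delta,x):=\{n\in\{1,\dots,N\} : \|x/n\|\ge\delta\}$. *)

(* Defs.v *)
From Stdlib Require Import Reals Lra Lia List Arith.
Open Scope R_scope.

Definition dist_nint (y : R) : R := Rmin (frac_part y) (1 - frac_part y).

Definition S1 (N : nat) (delta x : R) : list nat :=
  filter (fun n => if Rle_dec delta (dist_nint (x / INR n)) then true else false)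
         (seq 1 N).

Definition cardS1 (N : nat) (delta x : R) : nat := length (S1 N delta x).

(* Main.v *)
Require Import Defs.
From Stdlib Require Import Reals Lra Lia List Arith.
From Stdlib Require Import ZArith.
Open Scope R_scope.

Fixpoint cnt (f : nat -> bool) (a L : nat) : nat :=
  match L with 0 => 0%nat | S L => ((if f a then 1 else 0) + cnt f (S a) L)%nat end.

Lemma filter_seq_cnt f L : forall a, length (filter f (seq a L)) = cnt f a L.
Proof. induction L; intros a; simpl; auto. destruct (f a); simpl; rewrite IHL; lia. Qed.

Lemma cnt_app f l1 : forall a l2, cnt f a (l1 + l2) = (cnt f a l1 + cnt f (a + l1) l2)%nat.
Proof. induction l1; intros a l2; simpl. rewrite Nat.add_0_r; auto.
  rewrite IHl1. replace (S a + l1)%nat with (a + S l1)%nat by lia. lia. Qed.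

Lemma cnt_tail_false f L : forall a K, (forall b, (a + K <= b)%nat -> (b < a + L)%nat -> f b = false) ->
  (cnt f a L <= K)%nat.
Proof. induction L; intros a K H; simpl. lia.
  destruct K as [|K].
  - rewrite (H a) by lia. specialize (IHL (S a) 0%nat). simpl. apply IHL. intros b Hb1 Hb2; apply H; lia.
  - assert (cnt f (S a) L <= K)%nat. { apply IHL. intros b Hb1 Hb2; apply H; lia. }
    destruct (f a); lia. Qed.

Lemma cnt_pair f M L : forall a, (1 <= M)%nat ->
  (forall b b', (a <= b)%nat -> (b < b')%nat -> (b' < a + L)%nat -> f b = true -> f b' = true -> (b' < b + M)%nat) ->
  (cnt f a L <= M)%nat.
Proof. induction L; intros a HM H; simpl. lia.
  destruct (f a) eqn:Ea.
  - assert (cnt f (S a) L <= M - 1)%nat.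
    { apply cnt_tail_false. intros b Hb1 Hb2. destruct (f b) eqn:Eb; auto.
      specialize (H a b ltac:(lia) ltac:(lia) ltac:(lia) Ea Eb). lia. }
    lia.
  - simpl. apply IHL; auto. intros b b' H1 H2 H3 H4 H5. apply (H b b'); auto; lia. Qed.

Lemma cnt_zero_all f L : forall a, cnt f a L = 0%nat -> forall i, (i < L)%nat -> f (a + i)%nat = false.
Proof. induction L; intros a H i Hi. lia. simpl in H. destruct (f a) eqn:E. simpl in H; lia.
  simpl in H. destruct i. rewrite Nat.add_0_r; auto. replace (a + S i)%nat with (S a + i)%nat by lia.
  apply IHL; auto; lia. Qed.

Fixpoint sumz (g : nat -> nat) (Z : nat) : nat :=
  match Z with 0 => 0%nat | S Z' => (sumz g Z' + g (S Z'))%nat end.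

Lemma sumz_add g h Z : sumz (fun z => g z + h z)%nat Z = (sumz g Z + sumz h Z)%nat.
Proof. induction Z; simpl; lia. Qed.

Lemma sumz_ext g h Z : (forall z, g z = h z) -> sumz g Z = sumz h Z.
Proof. intros H; induction Z; simpl; auto. Qed.

Lemma sumz_ge g Z : forall z, (1 <= z <= Z)%nat -> (g z <= sumz g Z)%nat.
Proof. induction Z; intros z Hz. lia. simpl. destruct (Nat.eq_dec z (S Z)). subst; lia.
  specialize (IHZ z ltac:(lia)). lia. Qed.

Lemma union_bound f (h : nat -> nat -> bool) Z L : forall a,
  (forall b, (a <= b)%nat -> (b < a + L)%nat -> f b = true \/ exists z, (1 <= z <= Z)%nat /\ h z b = true) ->
  (L <= cnt f a L + sumz (fun z => cnt (h z) a L) Z)%nat.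
Proof. induction L; intros a H. lia. simpl.
  try rewrite (sumz_ext _ (fun z => (if h z a then 1 else 0) + cnt (h z) (S a) L)%nat) by (intros; reflexivity).
  rewrite sumz_add.
  assert (IH := IHL (S a) ltac:(intros b Hb1 Hb2; apply H; lia)).
  assert (1 <= (if f a then 1 else 0) + sumz (fun z => if h z a then 1 else 0) Z)%nat.
  { destruct (H a ltac:(lia) ltac:(lia)) as [Hf|[z [Hz Hh]]]. rewrite Hf; lia.
    assert (T := sumz_ge (fun z => if h z a then 1 else 0)%nat Z z Hz). simpl in T. rewrite Hh in T. lia. }
  lia. Qed.

Fixpoint sumr (g : nat -> R) (Z : nat) : R :=
  match Z with 0 => 0 | S Z' => sumr g Z' + g (S Z') end.

Lemma sumz_le g r Z : (forall z, (1 <= z <= Z)%nat -> INR (g z) <= r z) -> INR (sumz g Z) <= sumr r Z.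
Proof. induction Z; intros H; simpl. lra. rewrite plus_INR.
  assert (INR (sumz g Z) <= sumr r Z) by (apply IHZ; intros; apply H; lia).
  specialize (H (S Z) ltac:(lia)). lra. Qed.

Fixpoint prodk (n j : nat) : R := match j with 0 => 1 | S j' => prodk n j' * INR (n + j') end.

Lemma prodk_shift n j : prodk n (S j) = INR n * prodk (S n) j.
Proof. induction j. simpl. rewrite Nat.add_0_r; ring.
  change (prodk n (S (S j))) with (prodk n (S j) * INR (n + S j)). rewrite IHj. change (prodk (S n) (S j)) with (prodk (S n) j * INR (S n + j)).
  replace (n + S j)%nat with (S n + j)%nat by lia. ring. Qed.

Lemma prodk_pos n j : (1 <= n)%nat -> 0 < prodk n j.
Proof. intros H; induction j; simpl. lra. apply Rmult_lt_0_compat; auto. apply lt_0_INR; lia. Qed.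

Fixpoint E (x : R) (j n : nat) : R := match j with 0 => x / INR n | S j' => E x j' n - E x j' (S n) end.

Lemma E_closed x j : forall n, (1 <= n)%nat -> E x j n = x * INR (fact j) / prodk n (S j).
Proof. induction j; intros n Hn.
  - simpl. rewrite Nat.add_0_r. field. apply not_0_INR; lia.
  - change (E x (S j) n) with (E x j n - E x j (S n)). rewrite IHj by lia. rewrite IHj by lia.
    rewrite (prodk_shift n (S j)). rewrite (prodk_shift n j).
    change (prodk (S n) (S j)) with (prodk (S n) j * INR (S n + j)).
    assert (0 < prodk (S n) j) by (apply prodk_pos; lia).
    assert (0 < INR n) by (apply lt_0_INR; lia).
    change (fact (S j)) with (S j * fact j)%nat. rewrite mult_INR.
    rewrite plus_INR, !S_INR. field. assert (0 <= INR j) by apply pos_INR. repeat split; lra. Qed.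

Definition near (y e : R) := exists z : Z, Rabs (y - IZR z) < e.

Lemma near_sub a b e1 e2 : near a e1 -> near b e2 -> near (a - b) (e1 + e2).
Proof. intros [z1 H1] [z2 H2]. exists (z1 - z2)%Z. rewrite minus_IZR.
  replace (a - b - (IZR z1 - IZR z2)) with ((a - IZR z1) - (b - IZR z2)) by ring.
  eapply Rle_lt_trans. apply Rabs_triang. rewrite Rabs_Ropp. lra. Qed.

Lemma near_E x d j : forall n, (forall i, (i <= j)%nat -> near (x / INR (n + i)) d) -> near (E x j n) (2 ^ j * d).
Proof. induction j; intros n H.
  - simpl. specialize (H 0%nat ltac:(lia)). rewrite Nat.add_0_r in H. replace (1 * d) with d by ring; auto.
  - simpl. replace (2 * 2 ^ j * d) with (2 ^ j * d + 2 ^ j * d) by ring. apply near_sub.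
    + apply IHj. intros i Hi; apply H; lia.
    + apply IHj. intros i Hi. replace (S n + i)%nat with (n + S i)%nat by lia. apply H; lia. Qed.

Lemma dist_near y d : dist_nint y < d -> near y d.
Proof. unfold dist_nint, frac_part. intros H. destruct (base_fp y) as [F1 F2]. unfold frac_part in F1, F2.
  unfold Rmin in H. destruct (Rle_dec (y - IZR (Int_part y)) (1 - (y - IZR (Int_part y)))).
  - exists (Int_part y). rewrite Rabs_right; lra.
  - exists (Int_part y + 1)%Z. rewrite plus_IZR. rewrite Rabs_left1; lra. Qed.

Lemma pow_lt_compat a b n : 0 <= a < b -> (1 <= n)%nat -> a ^ n < b ^ n.
Proof. intros H Hn. induction n. lia. destruct n. simpl; lra.
  simpl. simpl in IHn. assert (0 <= a * a ^ n) by (apply Rmult_le_pos; [lra| apply pow_le; lra]).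
  specialize (IHn ltac:(lia)). nra. Qed.

Lemma root_le a b n : 0 <= a -> 0 <= b -> (1 <= n)%nat -> a ^ n <= b ^ n -> a <= b.
Proof. intros Ha Hb Hn H. destruct (Rle_dec a b); auto. exfalso.
  assert (b ^ n < a ^ n) by (apply pow_lt_compat; auto; lra). lra. Qed.

Lemma bernoulli t n : 0 <= t -> 1 + INR n * t <= (1 + t) ^ n.
Proof. intros Ht. induction n. simpl; lra. rewrite S_INR. simpl.
  assert (0 <= INR n) by apply pos_INR. nra. Qed.

Lemma exp_pow_n a n : exp a ^ n = exp (INR n * a).
Proof. induction n. simpl. rewrite Rmult_0_l, exp_0; auto.
  rewrite S_INR. simpl. rewrite IHn. rewrite <- exp_plus. f_equal; ring. Qed.

Lemma onep_pow k : (1 <= k)%nat -> (1 + / INR k) ^ k <= 3.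
Proof. intros Hk. assert (0 < INR k) by (apply lt_0_INR; lia).
  apply Rle_trans with (exp (/ INR k) ^ k).
  - apply pow_incr. split. assert (0 < / INR k) by (apply Rinv_0_lt_compat; lra). lra.
    left. apply exp_ineq1. apply Rinv_neq_0_compat. lra.
  - rewrite exp_pow_n. rewrite Rinv_r by lra. apply exp_le_3. Qed.

Lemma fact_lb k : (INR k / 3) ^ k <= INR (fact k).
Proof. induction k. simpl; lra.
  destruct k. simpl; lra.
  set (m := S k) in *. assert (Hm: 0 < INR m) by (apply lt_0_INR; unfold m; lia).
  change (fact (S m)) with (S m * fact m)%nat. rewrite mult_INR.
  replace (INR (S m) / 3) with ((INR m / 3) * (1 + / INR m)) by (rewrite S_INR; field; lra).
  rewrite <- tech_pow_Rmult. rewrite Rpow_mult_distr.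
  assert (H3 := onep_pow m ltac:(unfold m; lia)).
  assert (0 <= (INR m / 3) ^ m) by (apply pow_le; lra).
  assert (0 <= (1 + / INR m) ^ m) by (apply pow_le; assert (0 < / INR m) by (apply Rinv_0_lt_compat; lra); lra).
  assert (E1 : INR m / 3 * (1 + / INR m) = INR (S m) / 3) by (rewrite S_INR; field; lra).
  rewrite E1. assert (0 <= INR (S m)) by apply pos_INR.
  apply Rle_trans with (INR (S m) / 3 * ((INR m / 3) ^ m * 3)).
  apply Rmult_le_compat_l. lra. apply Rmult_le_compat_l; lra.
  replace (INR (S m) / 3 * ((INR m / 3) ^ m * 3)) with (INR (S m) * (INR m / 3) ^ m) by field.
  apply Rmult_le_compat_l; lra. Qed.

Lemma four_thirds k : (7 <= k)%nat -> INR k <= (4/3) ^ k.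
Proof. intros H. induction H. simpl. lra. rewrite S_INR. simpl.
  assert (7 <= INR m) by (replace 7 with (INR 7) by (simpl; lra); apply le_INR; auto). lra. Qed.

Lemma factm1_lb k : (7 <= k)%nat -> (INR k / 4) ^ k <= INR (fact (k - 1)).
Proof. intros Hk. destruct k. lia. replace (S k - 1)%nat with k by lia.
  assert (H1 := fact_lb (S k)). change (fact (S k)) with (S k * fact k)%nat in H1. rewrite mult_INR in H1.
  assert (Hs: 0 < INR (S k)) by (apply lt_0_INR; lia).
  assert (H2 := four_thirds (S k) Hk).
  replace (INR (S k) / 3) with ((INR (S k) / 4) * (4/3)) in H1 by field.
  rewrite Rpow_mult_distr in H1.
  assert (0 <= (INR (S k) / 4) ^ S k) by (apply pow_le; lra).
  assert ((INR (S k) / 4) ^ S k * INR (S k) <= INR (S k) * INR (fact k)).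
  { apply Rle_trans with ((INR (S k) / 4) ^ S k * (4 / 3) ^ S k); auto. apply Rmult_le_compat_l; lra. }
  nra. Qed.

Lemma ln_step z : 0 < z -> / (z + 1) <= ln (z + 1) - ln z.
Proof. intros Hz. assert (H := exp_ineq1 (- / (z+1))).
  assert (0 < / (z+1)) by (apply Rinv_0_lt_compat; lra).
  assert (H' : 1 + - / (z + 1) < exp (- / (z + 1))) by (apply H; lra).
  replace (1 + - / (z+1)) with (z / (z+1)) in H' by (field; lra).
  assert (0 < z / (z+1)) by (apply Rdiv_lt_0_compat; lra).
  apply ln_increasing in H'; auto. rewrite ln_exp in H'. unfold Rdiv in H'. rewrite ln_mult in H' by auto.
  rewrite ln_Rinv in H' by lra. lra. Qed.

Lemma harmonic c Z : 0 <= c -> (1 <= Z)%nat -> sumr (fun z => c / INR z + 1) Z <= c * (1 + ln (INR Z)) + INR Z.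
Proof. intros Hc HZ. induction HZ.
  - simpl. rewrite ln_1. lra.
  - change (sumr (fun z => c / INR z + 1) (S m)) with (sumr (fun z => c / INR z + 1) m + (c / INR (S m) + 1)).
    assert (0 < INR m) by (apply lt_0_INR; lia).
    assert (Hl := ln_step (INR m) H). rewrite <- S_INR in Hl.
    assert (c / INR (S m) <= c * (ln (INR (S m)) - ln (INR m))).
    { unfold Rdiv. apply Rmult_le_compat_l; auto. }
    rewrite S_INR at 3. lra. Qed.

Lemma prodk_lo n j : INR n ^ j <= prodk n j.
Proof. induction j; simpl. lra. rewrite Rmult_comm. apply Rmult_le_compat; auto.
  apply pow_le, pos_INR. apply pos_INR. apply le_INR; lia. Qed.

Lemma prodk_hi n j : prodk n j <= INR (n + j) ^ j.
Proof. induction j; simpl. lra.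
  assert (0 <= prodk n j) by (eapply Rle_trans; [apply pow_le, pos_INR| apply prodk_lo]).
  rewrite Rmult_comm. apply Rmult_le_compat; auto. apply pos_INR. apply le_INR; lia.
  eapply Rle_trans. apply IHj. apply pow_incr. split. apply pos_INR. apply le_INR; lia. Qed.

Lemma prodk_ratio n k j : (1 <= n)%nat -> (j <= k)%nat ->
  prodk n j * (1 + INR k / INR (n + k)) ^ j <= prodk (n + k) j.
Proof. intros Hn. induction j; intros Hj; simpl. lra.
  specialize (IHj ltac:(lia)).
  assert (0 < INR (n + k)) by (apply lt_0_INR; lia).
  assert (0 <= INR k / INR (n+k)) by (unfold Rdiv; apply Rmult_le_pos; [apply pos_INR|left; apply Rinv_0_lt_compat; lra]).
  assert (0 <= prodk n j) by (left; apply prodk_pos; lia).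
  assert (0 <= (1 + INR k / INR (n + k)) ^ j) by (apply pow_le; lra).
  assert (INR (n + j) * (1 + INR k / INR (n + k)) <= INR (n + k + j)).
  { rewrite !plus_INR. rewrite !plus_INR in H. field_simplify; [|lra].
    apply Rmult_le_reg_r with (INR n + INR k); [lra|]. field_simplify; [|lra].
    assert (INR j <= INR k) by (apply le_INR; lia). assert (0 <= INR n) by apply pos_INR. assert (0 <= INR k) by apply pos_INR. nra. }
  replace (prodk n j * INR (n + j) * ((1 + INR k / INR (n + k)) * (1 + INR k / INR (n + k)) ^ j))
    with ((prodk n j * (1 + INR k / INR (n + k)) ^ j) * (INR (n + j) * (1 + INR k / INR (n + k)))) by ring.
  apply Rmult_le_compat; auto. apply Rmult_le_pos; auto. apply Rmult_le_pos. apply pos_INR. lra. Qed.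

Lemma block_cnt (g : nat -> bool) k L : forall a,
  (cnt (fun b => Nat.ltb 0 (cnt g (k * b) k)) a L <= cnt g (k * a) (k * L))%nat.
Proof. induction L; intros a. simpl. rewrite Nat.mul_0_r. simpl. lia.
  replace (k * S L)%nat with (k + k * L)%nat by lia. rewrite cnt_app.
  simpl. specialize (IHL (S a)). replace (k * S a)%nat with (k * a + k)%nat in IHL by lia.
  destruct (Nat.ltb 0 (cnt g (k * a) k)) eqn:E. apply Nat.ltb_lt in E. lia.
  lia. Qed.

Lemma rpow_inv_pow a k : 0 < a -> (1 <= k)%nat -> Rpower a (1 / INR k) ^ k = a.
Proof. intros Ha Hk. rewrite <- Rpower_pow by (unfold Rpower; apply exp_pos).
  rewrite Rpower_mult. replace (1 / INR k * INR k) with 1. apply Rpower_1; auto.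
  field. apply not_0_INR; lia. Qed.

Lemma ln2_lt1 : ln 2 < 1.
Proof. assert (E: ln (exp 1) = 1) by apply ln_exp. rewrite <- E. apply ln_increasing. lra.
  assert (H := exp_ineq1 1 ltac:(lra)). lra. Qed.

Definition gS (delta x : R) (n : nat) : bool :=
  if Rle_dec delta (dist_nint (x / INR n)) then true else false.

Lemma cardS1_cnt N delta x : cardS1 N delta x = cnt (gS delta x) 1 N.
Proof. unfold cardS1, S1. apply filter_seq_cnt. Qed.

Lemma exists_floor r : 0 <= r -> exists n : nat, INR n <= r < INR n + 1.
Proof. intros Hr. destruct (base_Int_part r) as [H1 H2].
  assert (0 <= Int_part r)%Z. { assert (-1 < IZR (Int_part r)) by lra.
    assert (-1 < Int_part r)%Z by (apply lt_IZR; auto). lia. }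
  exists (Z.to_nat (Int_part r)). rewrite INR_IZR_INZ, Z2Nat.id by auto. lra. Qed.

Lemma exists_ceil r : 0 <= r -> exists n : nat, r <= INR n <= r + 1.
Proof. intros Hr. destruct (exists_floor r Hr) as [n Hn]. exists (S n). rewrite S_INR. lra. Qed.

Lemma up_nat r : 0 < r -> exists M : nat, r < INR M <= r + 1.
Proof. intros Hr. destruct (exists_floor r) as [n Hn]. lra. exists (S n). rewrite S_INR. lra. Qed.

Theorem lemma3p9 :
  exists k0 : nat,
    forall (k N : nat) (delta x : R),
      (k0 <= k)%nat ->
      (0 < N)%nat ->
      (k * 4 ^ k <= N)%nat ->
      0 < delta -> delta <= / (2 ^ k) / 20 ->
      4 ^ (k * k) <= x -> x <= (INR N) ^ k / INR (Factorial.fact (k - 1)) ->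
      INR (cardS1 N delta x) >= Rpower x (1 / INR k) / 200.
Proof.
  exists 10%nat. intros k N delta x Hk HN HNk Hd0 Hd1 Hx1 Hx2.
  assert (Hk1 : (1 <= k)%nat) by lia.
  assert (kpos : 0 < INR k) by (apply lt_0_INR; lia).
  assert (k10 : 10 <= INR k) by (replace 10 with (INR 10) by (simpl; lra); apply le_INR; lia).
  set (F := INR (fact (k - 1))) in *.
  assert (Fpos : 0 < F) by (apply lt_0_INR, lt_O_fact).
  assert (p2 : 1024 <= 2 ^ k).
  { replace 1024 with (2 ^ 10) by (simpl; lra). apply Rle_pow; [lra|lia]. }
  assert (p4 : 4 ^ k = 2 ^ k * 2 ^ k).
  { rewrite <- Rpow_mult_distr. f_equal; lra. }
  assert (Hxk : 4 ^ (k * k) = (4 ^ k) ^ k) by (rewrite pow_mult; auto).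
  assert (xpos : 0 < x) by (assert (0 < 4 ^ (k * k)) by (apply pow_lt; lra); lra).
  set (y := Rpower x (1 / INR k)).
  assert (ypos : 0 < y) by (unfold y, Rpower; apply exp_pos).
  assert (Hy : y ^ k = x) by (apply rpow_inv_pow; auto).
  assert (y4 : 4 ^ k <= y).
  { assert (0 < 4 ^ k) by (apply pow_lt; lra).
    apply (root_le _ _ k); [lra|lra|auto|]. rewrite Hy, <- Hxk; auto. }
  assert (yb : 1024 * 2 ^ k <= y) by nra.
  set (C := F * x).
  assert (Cpos : 0 < C) by (unfold C; nra).
  set (m0 := Rpower C (1 / INR k)).
  assert (m0pos : 0 < m0) by (unfold m0, Rpower; apply exp_pos).
  assert (Hm0 : m0 ^ k = C) by (apply rpow_inv_pow; auto).
  assert (m0N : m0 <= INR N).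
  { apply (root_le _ _ k); [lra | apply pos_INR | auto |]. rewrite Hm0. unfold C.
    apply Rmult_le_compat_l with (r := F) in Hx2; [|lra].
    replace (F * (INR N ^ k / F)) with (INR N ^ k) in Hx2 by (field; lra). lra. }
  assert (m0ky : INR k * y / 4 <= m0).
  { apply (root_le _ _ k); [|lra | auto |].
    unfold Rdiv; apply Rmult_le_pos; [apply Rmult_le_pos; lra| lra].
    rewrite Hm0. unfold C.
    replace (INR k * y / 4) with ((INR k / 4) * y) by field. rewrite Rpow_mult_distr, Hy.
    apply Rmult_le_compat_r; [lra|]. apply factm1_lb; lia. }
  set (t := m0 / INR k).
  assert (ty : y / 4 <= t).
  { unfold t. apply Rmult_le_reg_r with (INR k); auto. field_simplify; lra. }
  assert (tm0 : m0 = t * INR k) by (unfold t; field; lra).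
  destruct (exists_ceil (t / 2)) as [B1 [HB1a HB1b]]. lra.
  destruct (exists_floor t) as [T [HTa HTb]]. lra.
  assert (HBT : (B1 + 1 < T)%nat).
  { apply INR_lt. rewrite plus_INR. simpl. lra. }
  set (L := (T - 1 - B1)%nat).
  assert (HL : INR L >= t / 2 - 3).
  { unfold L. rewrite !minus_INR by lia. simpl. lra. }
  assert (HB1pos : (1 <= B1)%nat).
  { destruct B1. simpl in HB1a. lra. lia. }
  assert (HkT : INR (k * T) <= m0).
  { rewrite mult_INR. rewrite tm0. rewrite Rmult_comm. apply Rmult_le_compat_r; lra. }
  assert (R1 : forall b, (b < B1 + L)%nat -> INR (k * b + k) <= m0).
  { intros b Hb. eapply Rle_trans; [|apply HkT]. apply le_INR.
    replace (k * b + k)%nat with (k * S b)%nat by lia. apply Nat.mul_le_mono_l. unfold L in Hb. lia. }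
  assert (R2 : forall b, (B1 <= b)%nat -> m0 / 2 <= INR (k * b)).
  { intros b Hb. rewrite mult_INR. assert (INR B1 <= INR b) by (apply le_INR; auto).
    rewrite tm0. nra. }
  assert (R3 : forall b, (B1 <= b)%nat -> (1 <= k * b)%nat).
  { intros b Hb. nia. }
  set (u := fun b : nat => C / prodk (k * b) k).
  assert (U1 : forall b, (B1 <= b)%nat -> (b < B1 + L)%nat -> 1 <= u b <= 2 ^ k).
  { intros b Hb1 Hb2. assert (P0 : 0 < prodk (k * b) k) by (apply prodk_pos; auto).
    unfold u. split.
    - assert (prodk (k * b) k <= C).
      { eapply Rle_trans. apply prodk_hi. rewrite <- Hm0. apply pow_incr. split. apply pos_INR. apply R1; auto. }
      apply Rmult_le_reg_r with (prodk (k * b) k); auto. field_simplify; lra.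
    - assert (C <= 2 ^ k * prodk (k * b) k).
      { eapply Rle_trans; [|apply Rmult_le_compat_l; [lra|apply prodk_lo]].
        rewrite <- Rpow_mult_distr. rewrite <- Hm0. apply pow_incr. split. lra.
        specialize (R2 b Hb1). lra. }
      apply Rmult_le_reg_r with (prodk (k * b) k); auto. field_simplify; lra. }
  set (kap := INR k * INR k / m0).
  assert (kappos : 0 < kap) by (unfold kap; apply Rdiv_lt_0_compat; nra).
  assert (U2 : forall b, (B1 <= b)%nat -> (b < B1 + L)%nat -> u (S b) * (1 + kap) <= u b).
  { intros b Hb1 Hb2. unfold u.
    assert (P0 : 0 < prodk (k * b) k) by (apply prodk_pos; auto).
    assert (Hr := prodk_ratio (k * b) k k (R3 b Hb1) (le_n k)).
    assert (Hbe := bernoulli (INR k / INR (k * b + k)) k).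
    assert (Hq : 0 < INR (k * b + k)) by (apply lt_0_INR; lia).
    assert (Hkk : kap <= INR k * (INR k / INR (k * b + k))).
    { unfold kap. specialize (R1 b Hb2). unfold Rdiv. rewrite <- Rmult_assoc.
      apply Rmult_le_compat_l. nra. apply Rinv_le_contravar; auto. }
    assert (0 <= INR k / INR (k * b + k)) by (unfold Rdiv; apply Rmult_le_pos; [lra| left; apply Rinv_0_lt_compat; lra]).
    specialize (Hbe H).
    assert (Hp : prodk (k * b) k * (1 + kap) <= prodk (k * S b) k).
    { replace (k * S b)%nat with (k * b + k)%nat by lia. eapply Rle_trans; [|apply Hr].
      apply Rmult_le_compat_l; lra. }
    assert (P1 : 0 < prodk (k * S b) k) by (apply prodk_pos; lia).
    apply Rmult_le_reg_r with (prodk (k * S b) k); auto.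
    replace (C / prodk (k * S b) k * (1 + kap) * prodk (k * S b) k) with (C * (1 + kap)) by (field; lra).
    replace (C / prodk (k * b) k * prodk (k * S b) k) with (C * (prodk (k * S b) k / prodk (k * b) k)) by (field; lra).
    apply Rmult_le_compat_l; [lra|]. apply Rmult_le_reg_r with (prodk (k * b) k); auto.
    field_simplify; lra. }
  assert (U3 : forall d b, (B1 <= b)%nat -> (b + d < B1 + L)%nat -> INR d * u (b + d)%nat * kap <= u b - u (b + d)%nat).
  { induction d; intros b Hb1 Hb2.
    - simpl. rewrite Nat.add_0_r. lra.
    - specialize (IHd b Hb1 ltac:(lia)).
      assert (S2 := U2 (b + d)%nat ltac:(lia) ltac:(lia)).
      replace (b + S d)%nat with (S (b + d)) by lia.
      assert (1 <= u (S (b + d))) by (apply U1; lia).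
      assert (0 <= INR d) by apply pos_INR.
      assert (0 <= INR d * kap * (u (b + d)%nat - u (S (b + d)))).
      { apply Rmult_le_pos. apply Rmult_le_pos; lra. nra. }
      rewrite S_INR. nra. }
  set (badz := fun (z b : nat) => if Rlt_dec (Rabs (u b - INR z)) (1/40) then true else false).
  set (c := 2 / (39 * kap)).
  assert (cpos : 0 < c) by (unfold c; apply Rdiv_lt_0_compat; lra).
  assert (Zc : forall z, (1 <= z)%nat -> INR (cnt (badz z) B1 L) <= c / INR z + 1).
  { intros z Hz. assert (zpos : 1 <= INR z) by (replace 1 with (INR 1) by reflexivity; apply le_INR; auto).
    assert (Dpos : 0 < c / INR z) by (apply Rdiv_lt_0_compat; lra).
    destruct (up_nat (c / INR z) Dpos) as [M [HM1 HM2]].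
    assert (HM : (1 <= M)%nat).
    { destruct M. simpl in HM1. lra. lia. }
    eapply Rle_trans; [apply le_INR; apply (cnt_pair _ M); auto|lra].
    intros b b' Hb1 Hbb Hb' E1 E2. unfold badz in E1, E2.
    destruct (Rlt_dec (Rabs (u b - INR z)) (1 / 40)) as [A1|]; [|discriminate].
    destruct (Rlt_dec (Rabs (u b' - INR z)) (1 / 40)) as [A2|]; [|discriminate].
    apply Rabs_def2 in A1. apply Rabs_def2 in A2.
    assert (Hd := U3 (b' - b)%nat b Hb1 ltac:(lia)).
    replace (b + (b' - b))%nat with b' in Hd by lia.
    assert (Hlt : INR (b' - b) < INR M).
    { apply Rle_lt_trans with (c / INR z); [|lra].
      destruct (Rle_dec (INR (b' - b)) (c / INR z)) as [|Hn]; auto. exfalso.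
      assert (Hge : c / INR z * (39 * INR z / 40) * kap <= INR (b' - b) * u b' * kap).
      { apply Rmult_le_compat_r; [lra|]. apply Rmult_le_compat; try lra. }
      replace (c / INR z * (39 * INR z / 40) * kap) with (1/20) in Hge by (unfold c; field; lra).
      lra. }
    apply INR_lt in Hlt. lia. }
  set (g := gS delta x).
  set (hb := fun b => Nat.ltb 0 (cnt g (k * b) k)).
  assert (d40 : 2 ^ (k - 1) * delta <= 1 / 40).
  { assert (E2 : 2 ^ k = 2 * 2 ^ (k - 1)) by (replace k with (S (k - 1)) at 1 by lia; reflexivity).
    assert (delta * 2 ^ k <= 1 / 20).
    { apply Rmult_le_compat_r with (r := 2 ^ k) in Hd1; [|lra].
      replace (/ 2 ^ k / 20 * 2 ^ k) with (1 / 20) in Hd1 by (field; lra). lra. }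
    rewrite E2 in H. lra. }
  assert (Cover : forall b, (B1 <= b)%nat -> (b < B1 + L)%nat ->
            hb b = true \/ exists z, (1 <= z <= 2 ^ k)%nat /\ badz z b = true).
  { intros b Hb1 Hb2. destruct (hb b) eqn:Eh; [left; auto|right].
    unfold hb in Eh. apply Nat.ltb_ge in Eh.
    assert (Z0 : cnt g (k * b) k = 0%nat) by lia.
    assert (Hnear : forall i, (i <= k - 1)%nat -> near (x / INR (k * b + i)) delta).
    { intros i Hi. apply dist_near. assert (G := cnt_zero_all g k (k * b) Z0 i ltac:(lia)).
      unfold g, gS in G. destruct (Rle_dec delta (dist_nint (x / INR (k * b + i)))); [discriminate|lra]. }
    assert (HE := near_E x delta (k - 1) (k * b) Hnear).
    rewrite E_closed in HE by (apply R3; auto).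
    replace (S (k - 1)) with k in HE by lia.
    destruct HE as [z Hz].
    assert (Hu : x * INR (fact (k - 1)) / prodk (k * b) k = u b) by (unfold u, C, F; field; apply Rgt_not_eq, prodk_pos, R3; auto).
    rewrite Hu in Hz. apply Rabs_def2 in Hz. destruct (U1 b Hb1 Hb2) as [Ua Ub].
    assert (zp : (0 < z)%Z) by (apply lt_IZR; simpl; lra).
    exists (Z.to_nat z).
    assert (Ez : INR (Z.to_nat z) = IZR z) by (rewrite INR_IZR_INZ, Z2Nat.id; auto; lia).
    split. split. lia.
    { apply Nat.lt_succ_r. apply INR_lt. rewrite S_INR, pow_INR, Ez. replace (INR 2) with 2 by (simpl; lra). lra. }
    unfold badz. rewrite Ez. destruct (Rlt_dec (Rabs (u b - IZR z)) (1 / 40)) as [|Hn]; auto.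
    exfalso. apply Hn. apply Rabs_def1; lra. }
  assert (UB := union_bound hb badz (2 ^ k) L B1 Cover).
  assert (SB : INR (sumz (fun z => cnt (badz z) B1 L) (2 ^ k)) <= c * (1 + INR k) + 2 ^ k).
  { eapply Rle_trans. apply (sumz_le _ (fun z => c / INR z + 1)). intros z Hz; apply Zc; lia.
    eapply Rle_trans. apply harmonic. lra. apply Nat.le_trans with (2 ^ 0)%nat. simpl; lia. apply Nat.pow_le_mono_r; lia.
    rewrite pow_INR. replace (INR 2) with 2 by (simpl; lra). rewrite ln_pow by lra.
    assert (ln 2 < 1) by apply ln2_lt1. assert (0 < ln 2) by (rewrite <- ln_1; apply ln_increasing; lra).
    assert (INR k * ln 2 <= INR k) by nra. nra. }
  assert (BC : (cnt hb B1 L <= cnt g (k * B1) (k * L))%nat) by apply block_cnt.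
  assert (NB : (k * B1 + k * L <= N)%nat).
  { apply INR_le. eapply Rle_trans; [|apply m0N]. eapply Rle_trans; [|apply HkT]. apply le_INR. unfold L. nia. }
  assert (CN : (cnt g (k * B1) (k * L) <= cnt g 1 N)%nat).
  { assert (1 <= k * B1)%nat by (apply R3; lia).
    assert (EN : N = ((k * B1 - 1) + (k * L + (N - (k * B1 - 1) - k * L)))%nat).
    { clearbody L. clear -NB H. set (a := (k * B1)%nat) in *. set (l := (k * L)%nat) in *. lia. }
    rewrite EN at 1.
    rewrite cnt_app, cnt_app. replace (1 + (k * B1 - 1))%nat with (k * B1)%nat by lia. lia. }
  rewrite cardS1_cnt. fold g.
  assert (Fin : INR L <= INR (cnt g 1 N) + INR (sumz (fun z => cnt (badz z) B1 L) (2 ^ k))).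
  { rewrite <- plus_INR. apply le_INR. lia. }
  assert (cb : c * (1 + INR k) <= 2.2 / 39 * t).
  { replace (c * (1 + INR k)) with (2 / 39 * t * (1 + / INR k)) by (unfold c, kap, t; field; lra).
    assert (/ INR k <= / 10) by (apply Rinv_le_contravar; lra).
    assert (0 <= t) by lra. nra. }
  lra.
Qed.
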